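(* Let $[X,d,m]$ be a metric random walk space with invariant and reversible measure $\nu$ under the standing assumptions below, and let $\Omega\subset X$ be a bounded $\nu$-measurable set with $0<\nu(\Omega)<\nu(X)$. Suppose $u_n\in BV_m(X)$, $n\in\mathbb{N}$, are $m$-least gradient functions in $\Omega$ and $u_n\to u$ in $L^1(X,\nu)$, where $u\in BV_m(X)$. Then $u$ is an $m$-least gradient function in $\Omega$.
   Context: A metric random walk space $[X,d,m]$ is a Polish metric space $(X,d)$ with a family $m=(m_x)_{x\in X}$ of Borel probability measures such that $x\mapsto m_x(A)$ is Borel measurable for every Borel $A$ and each $m_x$ has finite first moment. $\nu$ is invariant: $\nu(A)=\int_X m_x(A)\,d\nu(x)$ for all $\nu$-measurable $A$; reversible: $dm_x(y)\,d\nu(x)=dm_y(x)\,d\nu(y)$. Standing assumptions: $(X,d,\nu)$ is $\sigma$-finite, $\nu(X)<\infty$, $\nu$ ergodic (every Borel $B$ with $m_x(B)=1$ for all $x\in B$ has $\nu(B)\in\{0,\nu(X)\}$). $BV_m(X)$ is the set of $\nu$-measurable $u:X\to\mathbb{R}$ with $\int_X\int_X|u(y)-u(x)|\,dm_x(y)\,d\nu(x)<\infty$, and $TV_m(u):=\frac12\int_X\int_X|u(y)-u(x)|\,dm_x(y)\,d\nu(x)$. A function $u\in BV_m(X)$ is an $m$-least gradient function in $\Omega$ if $TV_m(u)\le TV_m(u+g)$ for every $g\in BV_m(X)$ with $g=0$ $\nu$-a.e. on $X\setminus\Omega$. *)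

(* Defs.v *)
From mathcomp Require Import all_boot all_order all_algebra.
From mathcomp Require Import all_classical all_reals all_analysis measurable_realfun.
Set Implicit Arguments. Unset Strict Implicit. Unset Printing Implicit Defensive.
Import Order.TTheory GRing.Theory Num.Theory.
Import numFieldTopology.Exports numFieldNormedType.Exports.
Local Open Scope classical_set_scope.
Local Open Scope ring_scope.

Section MRW.
Context {R : realType} {d : measure_display} {X : measurableType d}.

Definition is_metric (dist : X -> X -> R) : Prop :=
  [/\ forall x y, 0 <= dist x y,
      forall x y, dist x y = 0 <-> x = y,
      forall x y, dist x y = dist y x &
      forall x y z, dist x z <= dist x y + dist y z].

Definition dopen (dist : X -> X -> R) : set (set X) :=
  [set A | forall x, A x -> exists2 r : R, 0 < r & [set y | dist x y < r] `<=` A].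

Definition dcauchy (dist : X -> X -> R) (s : nat -> X) : Prop :=
  forall e : R, 0 < e -> exists N, forall p q, (N <= p)%N -> (N <= q)%N -> dist (s p) (s q) < e.

Definition dconverges (dist : X -> X -> R) (s : nat -> X) (x : X) : Prop :=
  forall e : R, 0 < e -> exists N, forall p, (N <= p)%N -> dist (s p) x < e.

Definition polish (dist : X -> X -> R) : Prop :=
  [/\ is_metric dist,
      (forall s, dcauchy dist s -> exists x, dconverges dist s x) &
      exists D : set X, countable D /\
        forall x (e : R), 0 < e -> exists2 y, D y & dist x y < e].

Definition borel_of (dist : X -> X -> R) : Prop :=
  (@measurable d X) = <<s dopen dist >>.

Definition dbounded (dist : X -> X -> R) (A : set X) : Prop :=
  exists x0 (r : R), forall x, A x -> dist x0 x <= r.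

Definition mrw_space (dist : X -> X -> R) (m : X -> probability X R)
  (nu : {measure set X -> \bar R}) : Prop :=
  polish dist /\ borel_of dist /\
      (forall A, measurable A -> measurable_fun [set: X] (fun x => (m x A : \bar R))) /\
      (forall x, (\int[m x]_y (dist x y)%:E < +oo)%E) /\
      (forall A, measurable A -> (nu A = \int[nu]_x m x A)%E) /\
      (* reversibility: dm_x(y) dnu(x) = dm_y(x) dnu(y) as measures on X x X *)
      (forall A B, measurable A -> measurable B ->
         (\int[nu]_(x in A) m x B = \int[nu]_(x in B) m x A)%E) /\
      (nu setT < +oo)%E /\
      (forall B, measurable B -> (forall x, B x -> m x B = 1%E) ->
         nu B = 0%E \/ nu B = nu setT).

Definition Jm (m : X -> probability X R) (nu : {measure set X -> \bar R})
  (u : X -> R) : \bar R :=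
  (\int[nu]_x \int[m x]_y (`|u y - u x|)%:E)%E.

Definition BVm (m : X -> probability X R) (nu : {measure set X -> \bar R})
  (u : X -> R) : Prop :=
  measurable_fun setT u /\ (Jm m nu u < +oo)%E.

Definition TVm (m : X -> probability X R) (nu : {measure set X -> \bar R})
  (u : X -> R) : \bar R := (Jm m nu u * 2^-1%:E)%E.

Definition least_gradient (m : X -> probability X R) (nu : {measure set X -> \bar R})
  (Omega : set X) (u : X -> R) : Prop :=
  BVm m nu u /\
  forall g : X -> R, BVm m nu g ->
    {ae nu, forall x, ~ Omega x -> g x = 0} ->
    (TVm m nu u <= TVm m nu (u \+ g)%R)%E.

End MRW.

(* Main.v *)
Require Import Defs.
From mathcomp Require Import all_boot all_order all_algebra.
From mathcomp Require Import all_classical all_reals all_analysis measurable_realfun.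
From HB Require Import structures.
From mathcomp Require Import ring lra.
Import Order.TTheory GRing.Theory Num.Theory.
Import numFieldTopology.Exports numFieldNormedType.Exports.
Local Open Scope classical_set_scope.
Local Open Scope ring_scope.

Ltac mtac := do 6 (try (first [ exact: measurable_cst | apply: emeasurable_funD | apply/measurable_EFinP | apply: measurable_funB ])).

Section aux.
Context {R : realType} {d : measure_display} {X : measurableType d}.
Variable (m : X -> probability X R).
Hypothesis hm : forall A, measurable A -> measurable_fun [set: X] (fun x => (m x A : \bar R)).
Variable nu : {measure set X -> \bar R}.
Hypothesis hnu : (nu setT < +oo)%E.
Hypothesis hinv : forall A, measurable A -> (nu A = \int[nu]_x m x A)%E.

Definition mk (x : X) : {measure set X -> \bar R} := m x.
Let mk_meas U : measurable U -> measurable_fun [set: X] (mk ^~ U).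
Proof. exact: hm. Qed.
HB.instance Definition _ := isKernel.Build _ _ X X R mk mk_meas.
Let mk_uub : measure_fam_uub mk.
Proof.
exists 2%R => x; have -> : (mk x setT = 1)%E by exact: probability_setT.
by rewrite lte_fin ltr1n.
Qed.
HB.instance Definition _ := Kernel_isFinite.Build _ _ X X R mk mk_uub.

Definition lk (x : X) : {measure set X -> \bar R} := nu.
Let lk_meas U : measurable U -> measurable_fun [set: X] (lk ^~ U).
Proof. by move=> _; exact: measurable_cst. Qed.
HB.instance Definition _ := isKernel.Build _ _ X X R lk lk_meas.
Let lk_uub : measure_fam_uub lk.
Proof.
exists (fine (nu setT) + 1)%R => x; rewrite /lk.
have hf : nu setT \is a fin_num by rewrite ge0_fin_numE.
by rewrite -{1}(fineK hf) lte_fin ltrDl.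
Qed.
HB.instance Definition _ := Kernel_isFinite.Build _ _ X X R lk lk_uub.

Definition kk (p : X * X) : {measure set X -> \bar R} := m p.2.
Let kk_meas U : measurable U -> measurable_fun [set: X * X] (kk ^~ U).
Proof.
move=> mU; rewrite /kk.
have H := measurableT_comp (hm _ mU) (@measurable_snd _ _ X X).
exact: H.
Qed.
HB.instance Definition _ := isKernel.Build _ _ (X * X)%type X R kk kk_meas.
Let kk_uub : measure_fam_uub kk.
Proof.
exists 2%R => x; have -> : (kk x setT = 1)%E by exact: probability_setT.
by rewrite lte_fin ltr1n.
Qed.
HB.instance Definition _ := Kernel_isFinite.Build _ _ (X * X)%type X R kk kk_uub.

Lemma INV (f : X -> \bar R) : (forall x, 0 <= f x)%E -> measurable_fun setT f ->
  (\int[nu]_x \int[m x]_y f y = \int[nu]_x f x)%E.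
Proof.
move=> f0 mf.
transitivity (\int[kcomp lk kk point]_z f z)%E.
  by rewrite integral_kcomp.
apply: eq_measure_integral => A mA _ /=.
by rewrite /kcomp /lk /kk /= -hinv.
Qed.

Lemma MK (F : X * X -> \bar R) : (forall z, 0 <= F z)%E -> measurable_fun setT F ->
  measurable_fun setT (fun x => \int[m x]_y F (x, y))%E.
Proof.
move=> F0 mF; exact: (@measurable_kfcomp _ _ X X R mk F mF F0).
Qed.

Lemma LIP (v w : X -> R) : measurable_fun setT v -> measurable_fun setT w ->
  (Jm m nu v <= Jm m nu w + (\int[nu]_x (`|v x - w x|)%:E + \int[nu]_x (`|v x - w x|)%:E))%E.
Proof.
move=> mv mw.
have mh : measurable_fun setT (fun x => `|v x - w x|).
  by apply: measurableT_comp => //; exact: measurable_funB.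
pose A := (fun x => \int[m x]_y (`|w y - w x|)%:E)%E.
pose B := (fun x => \int[m x]_y (`|v y - w y|)%:E)%E.
pose C := (fun x => (`|v x - w x|)%:E).
have mA : measurable_fun setT A.
  apply: (MK (fun p => (`|w p.2 - w p.1|)%:E)) => //.
  apply/measurable_EFinP; apply: measurableT_comp => //; apply: measurable_funB.
    exact: measurableT_comp mw measurable_snd.
  exact: measurableT_comp mw measurable_fst.
have mB : measurable_fun setT B.
  apply: (MK (fun p => (`|v p.2 - w p.2|)%:E)) => //.
  apply/measurable_EFinP; exact: measurableT_comp mh measurable_snd.
have mC : measurable_fun setT C by exact/measurable_EFinP.
have A0 x : (0 <= A x)%E by apply: integral_ge0.
have B0 x : (0 <= B x)%E by apply: integral_ge0.
have C0 x : (0 <= C x)%E by rewrite lee_fin.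
have step x : (\int[m x]_y (`|v y - v x|)%:E <= A x + B x + C x)%E.
  have e : (\int[m x]_y C x = C x)%E.
    rewrite integral_cst //.
    rewrite [X in (_ * X)%E = _](_ : _ = 1%E) ?mule1 //.
    exact: probability_setT.
  have mW : measurable_fun setT (fun y => (`|w y - w x|)%:E).
    apply/measurable_EFinP; apply: measurableT_comp => //; apply: measurable_funB => //.
    try exact: measurable_cst.
  have mV : measurable_fun setT (fun y => (`|v y - v x|)%:E).
    apply/measurable_EFinP; apply: measurableT_comp => //; apply: measurable_funB => //.
    try exact: measurable_cst.
  have mH : measurable_fun setT (fun y => (`|v y - w y|)%:E) by exact/measurable_EFinP.
  rewrite -e /A /B.
  rewrite -ge0_integralD //.
  rewrite -ge0_integralD //; last first.
  - exact: emeasurable_funD.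
  - by move=> y _; rewrite adde_ge0.
  apply: ge0_le_integral => //.
  - apply: emeasurable_funD => //; try exact: emeasurable_funD.
  - move=> y _; rewrite /C -!EFinD lee_fin.
    rewrite (_ : v y - v x = (w y - w x) + (v y - w y) - (v x - w x)); last by ring.
    apply: (le_trans (ler_normB _ _)); apply: lerD => //; exact: ler_normD.
have mV2 : measurable_fun setT (fun x => \int[m x]_y (`|v y - v x|)%:E)%E.
  apply: (MK (fun p => (`|v p.2 - v p.1|)%:E)) => //.
  apply/measurable_EFinP; apply: measurableT_comp => //; apply: measurable_funB.
    exact: measurableT_comp mv measurable_snd.
  exact: measurableT_comp mv measurable_fst.
have mAB : measurable_fun setT (fun x => A x + B x)%E by exact: emeasurable_funD.
have mABC : measurable_fun setT (fun x => A x + B x + C x)%E by exact: emeasurable_funD.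
have L : (\int[nu]_x (\int[m x]_y (`|v y - v x|)%:E) <= \int[nu]_x (A x + B x + C x))%E.
  apply: ge0_le_integral => //.
    by move=> x _; apply: integral_ge0.
rewrite /Jm; apply: (le_trans L).
rewrite (@ge0_integralD _ _ _ nu setT measurableT (fun x => A x + B x)%E C) //; last first.
  by move=> x _; rewrite adde_ge0.
rewrite (@ge0_integralD _ _ _ nu setT measurableT A B) //.
rewrite /B INV //.
by rewrite /C -addeA.
Qed.

End aux.

Theorem mainTheorem2 (R : realType) (d : measure_display) (X : measurableType d)
  (dist : X -> X -> R) (m : X -> probability X R) (nu : {measure set X -> \bar R})
  (Omega : set X) (u_ : nat -> X -> R) (u : X -> R) :
  mrw_space dist m nu ->
  measurable Omega -> dbounded dist Omega ->
  (0 < nu Omega)%E -> (nu Omega < nu setT)%E ->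
  (forall n, least_gradient m nu Omega (u_ n)) ->
  (forall n, nu.-integrable setT (EFin \o u_ n)) ->
  nu.-integrable setT (EFin \o u) ->
  (fun n => \int[nu]_x (`|u_ n x - u x|)%:E)%E @ \oo --> 0%E ->
  BVm m nu u ->
  least_gradient m nu Omega u.
Proof.
move=> [_ [_ [hm [_ [hinv [_ [hnu _]]]]]]] _ _ _ _ hlg _ _ hcvg hu.
split => // g hg hae.
have mun n : measurable_fun setT (u_ n) := (hlg n).1.1.
have mu := hu.1; have mg := hg.1.
pose e := fun n => (\int[nu]_x (`|u_ n x - u x|)%:E)%E.
have e0 n : (0 <= e n)%E by apply: integral_ge0 => x _; rewrite lee_fin.
have key (n : nat) : (Jm m nu u <= Jm m nu (u \+ g)%R + (e n + e n + (e n + e n)))%E.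
  have h1 := LIP m hm nu hnu hinv u (u_ n) mu (mun n).
  have h2 : (Jm m nu (u_ n) <= Jm m nu (u_ n \+ g)%R)%E.
    have := (hlg n).2 g hg hae; rewrite /TVm lee_pmul2r //.
  have h3 := LIP m hm nu hnu hinv (u_ n \+ g)%R (u \+ g)%R (measurable_funD (mun n) mg) (measurable_funD mu mg).
  have E1 : (\int[nu]_x (`|u x - u_ n x|)%:E = e n)%E.
    by apply: eq_integral => x _; rewrite distrC.
  have E3 : (\int[nu]_x (`|(u_ n \+ g) x - (u \+ g) x|)%:E = e n)%E.
    by apply: eq_integral => x _ /=; congr (_%:E); congr (`|_|); ring.
  rewrite E1 in h1; rewrite E3 in h3.
  apply: (le_trans h1); rewrite (addeA (Jm m nu (u \+ g)%R)).
  apply: leeD2r; exact: (le_trans h2 h3).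
have J0 : (0 <= Jm m nu u)%E.
  by apply: integral_ge0 => x _; apply: integral_ge0 => y _; rewrite lee_fin.
suff H : (Jm m nu u <= Jm m nu (u \+ g)%R)%E.
  by rewrite /TVm; apply: lee_wpmul2r => //; rewrite lee_fin invr_ge0.
apply/lee_addgt0Pr => eps eps0.
move/fine_cvgP: hcvg => [hfin hc].
have hlt := cvgr0_norm_lt _ hc (eps / 4) ltac:(by rewrite divr_gt0).
have [n [fn ln]] := filter_ex (filterI hfin (hlt _)).
apply: (le_trans (key n)); apply: leeD2l.
rewrite -(fineK (fn : e n \is a fin_num)) -!EFinD lee_fin.
have := ler_norm (fine (e n)); move: ln => /= ln.
lra.
Qed.
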